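(* Let $V$ be a valuation domain. (1) If $P$ is a branched prime ideal of $V$ and $Q$ is the prime ideal of $V$ directly below $P$ (i.e. $Q\subsetneq P$ with no prime ideal strictly between them), then the closure of $\mathcal P(P)$ in the constructible topology of $\mathcal I(V)$ is $\mathcal P(P)\cup\{Q\}$. (2) The set $\mathcal P_V$ of all primary ideals of $V$ is proconstructible in $\mathcal I(V)$.
   Context: A prime ideal $\mathfrak p$ is branched if there exists a $\mathfrak p$-primary ideal distinct from $\mathfrak p$ (for a branched prime of a valuation domain, the prime directly below it exists). $\mathcal P(P)$ denotes the set of $P$-primary ideals. $\mathcal I(V)$ is the set of ideals of $V$ with the Zariski topology having basis of open sets $\mathcal B(x_1,\ldots,x_n):=\{I\mid x_1,\ldots,x_n\in I\}$; it is spectral. The constructible topology is the coarsest topology in which all open quasi-compact subsets are clopen; proconstructible means closed in the constructible topology. *)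

(* Defs.v *)
From HB Require Import structures.
From mathcomp Require Import all_boot all_order all_algebra.
From mathcomp Require Import boolp classical_sets.
Set Implicit Arguments. Unset Strict Implicit. Unset Printing Implicit Defensive.
Import GRing.Theory.
Local Open Scope classical_set_scope.
Local Open Scope ring_scope.

Definition rdivides (R : comNzRingType) (a b : R) : Prop := exists c : R, b = a * c.

Definition valuation_domain (R : idomainType) : Prop :=
  forall a b : R, rdivides a b \/ rdivides b a.

Definition is_ideal (R : comNzRingType) (I : set R) : Prop :=
  [/\ I 0,
      (forall x y, I x -> I y -> I (x + y)) &
      (forall r x, I x -> I (r * x))].

Record ideal (R : comNzRingType) := Ideal { iset :> set R; iset_ideal : is_ideal iset }.

Definition is_prime (R : comNzRingType) (P : set R) : Prop :=
  [/\ is_ideal P, ~ P 1 & forall a b, P (a * b) -> P a \/ P b].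

Definition radical (R : comNzRingType) (I : set R) : set R :=
  [set x | exists n : nat, I (x ^+ n)].

Definition is_primary (R : comNzRingType) (I : set R) : Prop :=
  [/\ is_ideal I, ~ I 1 &
      forall a b, I (a * b) -> I a \/ exists n : nat, I (b ^+ n)].

Definition primaries_of (R : comNzRingType) (P : set R) : set (ideal R) :=
  [set I : ideal R | is_primary I /\ radical I = P].

Definition all_primaries (R : comNzRingType) : set (ideal R) :=
  [set I : ideal R | is_primary I].

Definition branched (R : comNzRingType) (P : set R) : Prop :=
  exists I : ideal R, primaries_of P I /\ (I : set R) <> P.

Definition directly_below (R : comNzRingType) (Q P : set R) : Prop :=
  [/\ is_prime Q, Q `<=` P, Q <> P &
      forall L : set R, is_prime L -> Q `<=` L -> L `<=` P -> L = Q \/ L = P].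

Definition zbasic (R : comNzRingType) (xs : seq R) : set (ideal R) :=
  [set I : ideal R | forall i, (i < size xs)%N -> (I : set R) (nth 0 xs i)].

Definition zariski_open (R : comNzRingType) (U : set (ideal R)) : Prop :=
  forall I, U I -> exists xs : seq R, zbasic xs I /\ zbasic xs `<=` U.

Definition zariski_qc (R : comNzRingType) (A : set (ideal R)) : Prop :=
  forall G : set (set (ideal R)),
    (forall U, G U -> zariski_open U) -> A `<=` \bigcup_(U in G) U ->
    exists (n : nat) (F : nat -> set (ideal R)),
      (forall i, (i < n)%N -> G (F i)) /\
      A `<=` [set I | exists i, (i < n)%N /\ F i I].

Inductive gen_open (X : Type) (S : set (set X)) : set X -> Prop :=
  | gen_sub U : S U -> gen_open S U
  | gen_setT : gen_open S setT
  | gen_setI U V : gen_open S U -> gen_open S V -> gen_open S (U `&` V)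
  | gen_bigcup (G : set (set X)) :
      (forall U, G U -> gen_open S U) -> gen_open S (\bigcup_(U in G) U).

(** The constructible topology: the coarsest topology in which all Zariski
    open quasi-compact sets are clopen, i.e. generated by these sets and their
    complements. *)
Definition cons_subbasis (R : comNzRingType) : set (set (ideal R)) :=
  [set U | (zariski_open U /\ zariski_qc U) \/
           (zariski_open (~` U) /\ zariski_qc (~` U))].

Definition cons_open (R : comNzRingType) (U : set (ideal R)) : Prop :=
  gen_open (@cons_subbasis R) U.

Definition cons_closure (R : comNzRingType) (A : set (ideal R)) : set (ideal R) :=
  [set I | forall U, cons_open U -> U I -> exists J, A J /\ U J].

Definition proconstructible (R : comNzRingType) (A : set (ideal R)) : Prop :=
  cons_open (~` A).

(* Main.v *)
Require Import Defs.
From mathcomp Require Import all_boot all_order all_algebra.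
From mathcomp Require Import boolp classical_sets.
From mathcomp Require Import ring.
Set Implicit Arguments. Unset Strict Implicit. Unset Printing Implicit Defensive.
Import GRing.Theory.
Local Open Scope classical_set_scope.
Local Open Scope ring_scope.

Lemma ideal_eq (R : comNzRingType) (I J : ideal R) : iset I = iset J -> I = J.
Proof.
case: I => I HI; case: J => J HJ /= e; subst J.
by rewrite (Prop_irrelevance HI HJ).
Qed.

Lemma isI0 (R : comNzRingType) (I : set R) : is_ideal I -> I 0.
Proof. by case. Qed.
Lemma isID (R : comNzRingType) (I : set R) x y : is_ideal I -> I x -> I y -> I (x + y).
Proof. by case=> _ h _; apply: h. Qed.
Lemma isIM (R : comNzRingType) (I : set R) r x : is_ideal I -> I x -> I (r * x).
Proof. by case=> _ _ h; apply: h. Qed.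
Lemma isIMr (R : comNzRingType) (I : set R) x r : is_ideal I -> I x -> I (x * r).
Proof. by move=> h Ix; rewrite mulrC; apply: isIM. Qed.

Lemma prime_expn (R : comNzRingType) (P : set R) x n :
  is_prime P -> P (x ^+ n) -> P x.
Proof.
move=> [_ P1 Pm]; elim: n => [|n IH]; first by rewrite expr0 => /P1 [].
by rewrite exprS => /Pm [|/IH].
Qed.

Lemma nprime_expn (R : comNzRingType) (P : set R) x n :
  is_prime P -> ~ P x -> ~ P (x ^+ n).
Proof. by move=> hP nx /(prime_expn hP). Qed.

Lemma prime_mul (R : comNzRingType) (P : set R) x y :
  is_prime P -> ~ P x -> ~ P y -> ~ P (x * y).
Proof. by move=> [_ _ Pm] nx ny /Pm []. Qed.

Lemma div_out (V : idomainType) (hV : valuation_domain V) (Q : set V) q x :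
  is_ideal Q -> Q q -> ~ Q x -> rdivides x q.
Proof.
move=> hQ Qq nQx; case: (hV x q) => // -[c e]; exfalso; apply: nQx.
by rewrite e; apply: isIMr.
Qed.

Lemma lemK (V : idomainType) (hV : valuation_domain V) (P Q : set V) x b :
  is_prime P -> directly_below Q P -> ~ Q x -> P b -> ~ Q b ->
  exists n, rdivides x (b ^+ n).
Proof.
move=> hP [hQ QP QnP Hmax] nQx Pb nQb.
apply: contrapT => H.
have H' : forall n, rdivides (b ^+ n) x.
  move=> n; case: (hV x (b ^+ n)) => // h; exfalso; apply: H; by exists n.
have Pnot1 : ~ P 1 by case: hP.
have idP : is_ideal P by case: hP.
have idQ : is_ideal Q by case: hQ.
have bnu : forall c, b * c <> 1.
  move=> c e; apply: Pnot1; rewrite -e; exact: isIMr.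
have b0 : b != 0.
  apply/eqP => b0; apply: nQb; rewrite b0; exact: isI0.
pose L := [set z : V | forall n, rdivides (b ^+ n) z].
have idL : is_ideal L.
  split.
  - by move=> n; exists 0; rewrite mulr0.
  - move=> y z Ly Lz n; case: (Ly n) => c1 ->; case: (Lz n) => c2 ->.
    by exists (c1 + c2); rewrite mulrDr.
  - move=> r y Ly n; case: (Ly n) => c ->; exists (r * c); by rewrite mulrCA.
have prL : is_prime L.
  split => //.
  - move=> L1; case: (L1 1%N) => c; rewrite expr1 => e; exact: (bnu c (esym e)).
  - move=> u v Luv; apply: contrapT => huv.
    have nu : ~ L u by move=> h; apply: huv; left.
    have nv : ~ L v by move=> h; apply: huv; right.
    have [m hm] : exists m, ~ rdivides (b ^+ m) u.
      apply: contrapT => h; apply: nu => m; apply: contrapT => h'; apply: h; by exists m.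
    have [k hk] : exists k, ~ rdivides (b ^+ k) v.
      apply: contrapT => h; apply: nv => m0; apply: contrapT => h'; apply: h; by exists m0.
    have [u' hu] : rdivides u (b ^+ m) by case: (hV u (b ^+ m)).
    have [v' hv] : rdivides v (b ^+ k) by case: (hV v (b ^+ k)).
    case: (Luv (m + k).+1) => w; rewrite exprS exprD hu hv => e.
    have uv0 : u * v != 0.
      apply/negP; rewrite mulf_eq0 => /orP [] /eqP e0.
      + by apply: nu; rewrite e0; exact: isI0.
      + by apply: nv; rewrite e0; exact: isI0.
    have e2 : u * v * (b * (u' * v' * w)) = u * v * 1.
      by rewrite mulr1 [in RHS]e; ring.
    exact: (bnu _ (mulfI uv0 e2)).
have QL : Q `<=` L.
  move=> q Qq n; apply: (div_out hV idQ Qq); exact: nprime_expn.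
have LP : L `<=` P.
  move=> z Lz; case: (Lz 1%N) => c ->; rewrite expr1; exact: isIMr.
case: (Hmax L prL QL LP) => eL.
- apply: nQx; rewrite -eL; exact: H'.
- have : L b by rewrite eL.
  move=> /(_ 2%N) [c e].
  rewrite expr2 -mulrA in e.
  have := mulfI b0 (etrans (mulr1 b) e) => e'.
  exact: (bnu c (esym e')).
Qed.

Lemma exists_PnQ (R : comNzRingType) (P Q : set R) :
  directly_below Q P -> exists p, P p /\ ~ Q p.
Proof.
move=> [_ QP QnP _]; apply: contrapT => h; apply: QnP.
apply/seteqP; split => // p Pp; apply: contrapT => nQ; apply: h; by exists p.
Qed.

Lemma QsubJ (V : idomainType) (hV : valuation_domain V) (P Q J : ideal V) :
  directly_below (iset Q) (iset P) -> primaries_of (iset P) J ->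
  iset Q `<=` iset J.
Proof.
move=> hQP [Jpr radJ] q Qq.
have [hQ _ _ _] := hQP.
have [p [Pp nQp]] := exists_PnQ hQP.
have : radical (iset J) p by rewrite radJ.
move=> [n Jpn].
have [c ->] := div_out hV (let: And3 a _ _ := hQ in a) Qq (@nprime_expn _ _ _ n hQ nQp).
exact: isIMr (iset_ideal J) Jpn.
Qed.

Lemma exists_primary_avoid (V : idomainType) (hV : valuation_domain V)
  (P Q : ideal V) w :
  is_prime (iset P) -> directly_below (iset Q) (iset P) -> iset P w -> ~ iset Q w ->
  exists J : ideal V, primaries_of (iset P) J /\ ~ iset J w.
Proof.
move=> hP hQP Pw nQw.
have [hQ QP _ _] := hQP.
have idP : is_ideal (iset P) by case: hP.
have idQ : is_ideal (iset Q) by case: hQ.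
have nP1 : ~ iset P 1 by case: hP.
pose Js := [set z : V | exists s, ~ iset P s /\ rdivides (w ^+ 2) (z * s)].
have idJ : is_ideal Js.
  split.
  - by exists 1; split => //; exists 0; rewrite mul0r mulr0.
  - move=> x y [s1 [ns1 [c1 e1]]] [s2 [ns2 [c2 e2]]].
    exists (s1 * s2); split; first exact: prime_mul.
    exists (c1 * s2 + c2 * s1).
    have -> : (x + y) * (s1 * s2) = x * s1 * s2 + y * s2 * s1 by ring.
    rewrite e1 e2; ring.
  - move=> r x [s [ns [c e]]]; exists s; split => //; exists (r * c).
    have -> : r * x * s = r * (x * s) by ring.
    rewrite e; ring.
have Pw2 : iset P (w ^+ 2) by rewrite expr2; exact: isIM.
have nQw2 : ~ iset Q (w ^+ 2) by exact: nprime_expn.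
have radJ : radical Js = iset P.
  apply/seteqP; split.
  - move=> z [n [s [ns [c e]]]].
    have : iset P (z ^+ n * s) by rewrite e; exact: isIMr.
    case: hP => _ _ Pm; case/Pm => // h; exact: prime_expn h.
  - move=> p Pp; case: (pselect (iset Q p)) => Qp.
    + exists 1%N; exists 1; split => //; rewrite expr1 mulr1.
      exact: (div_out hV idQ Qp nQw2).
    + have [n [c e]] := lemK hV hP hQP nQw2 Pp Qp.
      by exists n; exists 1; split => //; exists c; rewrite mulr1.
exists (@Ideal _ Js idJ); split; first split => /=.
- split => //.
  + move=> [s [ns [c e]]]; apply: ns; rewrite mul1r in e; rewrite e.
    exact: isIMr.
  + move=> a b [s [ns [c e]]]; case: (pselect (iset P b)) => Pb.
    * by right; have : radical Js b by rewrite radJ.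
    * left; exists (b * s); split; first exact: prime_mul.
      by exists c; rewrite mulrA.
- exact: radJ.
- move=> /= [s [ns [c e]]].
  have w0 : w != 0 by apply/eqP => w0; apply: nQw; rewrite w0; exact: isI0.
  rewrite expr2 -mulrA in e.
  have e' := mulfI w0 e.
  by apply: ns; rewrite e'; exact: isIMr.
Qed.

Lemma zbasicE (R : comNzRingType) (x : R) (I : ideal R) :
  zbasic [:: x] I <-> iset I x.
Proof.
split => [h|h]; first exact: (h 0%N).
by move=> [|i] //= _.
Qed.

Lemma pid_ideal (R : comNzRingType) (x : R) : is_ideal [set z | rdivides x z].
Proof.
split.
- by exists 0; rewrite mulr0.
- by move=> y z [c1 ->] [c2 ->]; exists (c1 + c2); rewrite mulrDr.
- by move=> r y [c ->]; exists (r * c); rewrite mulrCA.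
Qed.

Lemma zopen_B (R : comNzRingType) (x : R) : zariski_open (zbasic [:: x]).
Proof. rewrite /zariski_open => I h; exists [:: x]; split => //. Qed.

Lemma zqc_B (R : comNzRingType) (x : R) : zariski_qc (zbasic [:: x]).
Proof.
move=> G Gop cov.
have hx : zbasic [:: x] (@Ideal _ _ (pid_ideal x)).
  by apply/zbasicE; exists 1; rewrite mulr1.
case: (cov _ hx) => U GU Ux.
have [xs [xsI sub]] := Gop U GU _ Ux.
exists 1%N, (fun _ => U); split => // I /zbasicE BI.
exists 0%N; split => //; apply: sub => i hi.
have [c ->] := xsI i hi.
exact: isIMr (iset_ideal I) BI.
Qed.

Lemma cons_open_B (R : comNzRingType) (x : R) : cons_open (zbasic [:: x]).
Proof. by apply: gen_sub; left; split; [exact: zopen_B | exact: zqc_B]. Qed.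

Lemma cons_open_CB (R : comNzRingType) (x : R) : cons_open (~` zbasic [:: x]).
Proof.
by apply: gen_sub; right; rewrite setCK; split; [exact: zopen_B | exact: zqc_B].
Qed.

Lemma nonprimary_nbhd (V : idomainType) (hV : valuation_domain V) (I : ideal V) :
  ~ is_primary (iset I) ->
  exists U, cons_open U /\ U I /\ forall J : ideal V, U J -> ~ is_primary (iset J).
Proof.
move=> nI.
case: (pselect (iset I 1)) => I1.
  exists (zbasic [:: 1]); split; first exact: cons_open_B.
  split; first by apply/zbasicE.
  by move=> J /zbasicE J1 [_ nJ1 _].
have [a [b [hab [nIa nbn]]]] : exists a b, iset I (a * b) /\ ~ iset I a /\
    ~ exists n, iset I (b ^+ n).
  apply: contrapT => h; apply: nI; split => //; first exact: iset_ideal.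
  move=> a b hab; case: (pselect (iset I a)) => Ia; [by left | right].
  apply: contrapT => nE; apply: h; by exists a, b.
exists (zbasic [:: a * b] `&` ~` zbasic [:: a]); split.
  apply: gen_setI; [exact: cons_open_B | exact: cons_open_CB].
split; first by split; [apply/zbasicE | move/zbasicE].
move=> J [/zbasicE Jab nJa] [_ _ Jpr].
case: (Jpr a b Jab) => [Ja | [n Jbn]]; first by apply: nJa; apply/zbasicE.
case: (hV a (b ^+ n)) => -[c e].
- apply: nbn; exists n.+1.
  have -> : b ^+ n.+1 = c * (a * b) by rewrite exprSr e; ring.
  exact: isIM (iset_ideal I) hab.
- by apply: nJa; apply/zbasicE; rewrite e; exact: isIMr (iset_ideal J) Jbn.
Qed.

Lemma nbhdQ (V : idomainType) (hV : valuation_domain V) (P Q : ideal V) :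
  directly_below (iset Q) (iset P) ->
  forall U, cons_open U -> U Q ->
  exists y, ~ iset Q y /\
    forall J : ideal V, primaries_of (iset P) J -> ~ iset J y -> U J.
Proof.
move=> hQP; have [hQ _ _ _] := hQP.
have nQ1 : ~ iset Q 1 by case: hQ.
have QJ := QsubJ hV hQP.
move=> U; rewrite /cons_open; elim => {U}.
- move=> U [[Uop Uqc] | [Cop Cqc]] UQ.
  + have [xs [xsQ sub]] := Uop Q UQ.
    exists 1; split => // J pJ _; apply: sub => i hi; exact: QJ _ pJ _ (xsQ i hi).
  + pose G := [set W | exists xs, W = zbasic xs /\ zbasic xs `<=` ~` U].
    have Gop : forall W, G W -> zariski_open W.
      by move=> W [xs [-> _]]; rewrite /zariski_open => I h; exists xs; split => //.
    have cov : ~` U `<=` \bigcup_(W in G) W.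
      move=> I nUI; have [xs [xsI sub]] := Cop I nUI.
      by exists (zbasic xs) => //; exists xs.
    have [n [F [GF cF]]] := Cqc G Gop cov.
    have key : forall m, (m <= n)%N -> exists y, ~ iset Q y /\
        forall J : ideal V, ~ iset J y -> forall i, (i < m)%N -> ~ F i J.
      elim => [|m IH] hm; first by exists 1.
      have [y [nQy Hy]] := IH (ltnW hm).
      have [xs [eF sub]] := GF m hm.
      have [i [hi nQx]] : exists i, (i < size xs)%N /\ ~ iset Q (nth 0 xs i).
        apply: contrapT => h.
        have : zbasic xs Q.
          move=> i hi; apply: contrapT => nq; apply: h; by exists i.
        by move/sub.
      exists (y * nth 0 xs i); split; first exact: prime_mul.
      move=> J nJ j; rewrite ltnS leq_eqVlt => /orP [/eqP -> | lt].
      * rewrite eF => /(_ i hi) Jx; apply: nJ; exact: isIM (iset_ideal J) Jx.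
      * apply: Hy => // Jy; apply: nJ; exact: isIMr (iset_ideal J) Jy.
    have [y [nQy Hy]] := key n (leqnn n).
    exists y; split => // J pJ nJ; apply: contrapT => nUJ.
    have [i [hi FiJ]] := cF J nUJ.
    exact: Hy J nJ i hi FiJ.
- by move=> _; exists 1.
- move=> U W _ IHU _ IHW [UQ WQ].
  have [y1 [n1 H1]] := IHU UQ; have [y2 [n2 H2]] := IHW WQ.
  exists (y1 * y2); split; first exact: prime_mul.
  move=> J pJ nJ; split.
  + apply: H1 => // h; apply: nJ; exact: isIMr (iset_ideal J) h.
  + apply: H2 => // h; apply: nJ; exact: isIM (iset_ideal J) h.
- move=> G _ IH [W GW WQ].
  have [y [ny Hy]] := IH W GW WQ.
  exists y; split => // J pJ nJ; exists W => //; exact: Hy.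
Qed.

Lemma Q_in_closure (V : idomainType) (hV : valuation_domain V) (P Q : ideal V) :
  is_prime (iset P) -> directly_below (iset Q) (iset P) ->
  cons_closure (primaries_of (iset P)) Q.
Proof.
move=> hP hQP U Uo UQ.
have [hQ _ _ _] := hQP.
have [y [ny Hy]] := nbhdQ hV hQP Uo UQ.
have [p [Pp nQp]] := exists_PnQ hQP.
have idP : is_ideal (iset P) by case: hP.
have [J [pJ nJw]] := exists_primary_avoid hV hP hQP (isIMr y idP Pp)
  (prime_mul hQ nQp ny).
exists J; split => //; apply: Hy => // Jy; apply: nJw.
exact: isIM (iset_ideal J) Jy.
Qed.

Theorem proposition5p6 (V : idomainType) (hV : valuation_domain V) :
  (forall P Q : ideal V,
      is_prime P -> branched P -> directly_below Q P ->
      cons_closure (primaries_of P) = primaries_of P `|` [set Q]) /\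
  proconstructible (@all_primaries V).
Proof.
split.
  move=> P Q hP _ hQP.
  have [hQ QP _ _] := hQP.
  have idQ : is_ideal (iset Q) by case: hQ.
  apply/seteqP; split; last first.
    move=> I [pI | ->]; last exact: Q_in_closure.
    by move=> U _ UI; exists I.
  move=> I cl; case: (pselect (primaries_of P I)) => pI; [by left | right].
  case: (pselect (is_primary (iset I))) => prI; last first.
    have [U [Uo [UI HU]]] := nonprimary_nbhd hV prI.
    have [J [pJ UJ]] := cl U Uo UI.
    by case: (HU J UJ); case: pJ.
  case: (pselect (iset I `<=` iset P)) => IP; last first.
    have [x [Ix nPx]] : exists x, iset I x /\ ~ iset P x.
      apply: contrapT => h; apply: IP => x Ix; apply: contrapT => nx; apply: h.
      by exists x.
    have [J [[_ radJ] /zbasicE Jx]] := cl _ (cons_open_B x) (proj2 (zbasicE _ _) Ix).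
    exfalso; apply: nPx; rewrite -radJ; by exists 1%N; rewrite expr1.
  case: (pselect (iset I `<=` iset Q)) => IQ.
    case: (pselect (iset I = iset Q)) => eIQ; first exact: ideal_eq.
    have [y [Qy nIy]] : exists y, iset Q y /\ ~ iset I y.
      apply: contrapT => h; apply: eIQ; apply/seteqP; split => // y Qy.
      apply: contrapT => ny; apply: h; by exists y.
    have nB : (~` zbasic [:: y]) I by move/zbasicE.
    have [J [pJ nJ]] := cl _ (cons_open_CB y) nB.
    exfalso; apply: nJ; apply/zbasicE; exact: (QsubJ hV hQP pJ Qy).
  exfalso; apply: pI; split => //.
  have [x [Ix nQx]] : exists x, iset I x /\ ~ iset Q x.
    apply: contrapT => h; apply: IQ => x Ix; apply: contrapT => nx; apply: h.
    by exists x.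
  apply/seteqP; split.
    move=> z [n Izn]; exact: prime_expn hP (IP _ Izn).
  move=> p Pp; case: (pselect (iset Q p)) => Qp.
    exists 1%N; rewrite expr1.
    have [c ->] := div_out hV idQ Qp nQx.
    exact: isIMr (iset_ideal I) Ix.
  have [n [c e]] := lemK hV hP hQP nQx Pp Qp.
  by exists n; rewrite e; exact: isIMr (iset_ideal I) Ix.
rewrite /proconstructible.
have -> : ~` (@all_primaries V) =
    \bigcup_(U in [set U | cons_open U /\ U `<=` ~` (@all_primaries V)]) U.
  apply/seteqP; split.
    move=> I nI; have [U [Uo [UI HU]]] := nonprimary_nbhd hV nI.
    by exists U => //; split => // J UJ; exact: HU J UJ.
  by move=> I [U [_ sub] UI]; exact: sub.
by apply: gen_bigcup => U [Uo _].
Qed.
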